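(* Let $(X,\Sigma)$ be a measurable space, $(\mathcal{E}_t)_{t\ge0}$ a process of pavings, $\boldsymbol{\mu}=(\mu_t)_{t\ge0}$ a family of monotone measures on $\Sigma$, and $\mathscr{A}=\{\mathsf{A}_t(\cdot|E)\colon E\in\mathcal{E}_t,\,t\ge0\}$ an idempotent parametric family of conditional aggregation operators. Then for every $\lambda>0$ and every $t\ge0$, $$\boldsymbol{\mu}_{\mathscr{A}}(\lambda\mathbf{1}_X,t)=\sup\{\mu_t(E)\colon E\in\mathcal{E}_t\}\cdot\mathbf{1}_{[0,\lambda]}(t).$$ In particular, $\boldsymbol{\mu}_{\mathscr{A}}(\lambda\mathbf{1}_X,t)=\mu_t(X)\mathbf{1}_{[0,\lambda]}(t)$ if $X\in\mathcal{E}_t$.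
   Context: Convention: $\infty\cdot 0=0$. $\Sigma^0=\Sigma\setminus\{\emptyset\}$. $\mathbf{F}$ denotes the set of all $\Sigma$-measurable, nonnegative, bounded functions $f\colon X\to[0,\infty)$. A monotone measure is a map $\mu\colon\Sigma\to[0,\infty]$ with $\mu(B)\le\mu(C)$ whenever $B\subseteq C$, $\mu(\emptyset)=0$ and $\mu(X)>0$. For $E\in\Sigma^0$, a conditional aggregation operator (CAO) w.r.t. $E$ is a map $\mathsf{A}(\cdot|E)\colon\mathbf{F}\to[0,\infty]$ such that (C1) $\mathsf{A}(f|E)\le\mathsf{A}(g|E)$ whenever $f(x)\le g(x)$ for all $x\in E$, and (C2) $\mathsf{A}(\mathbf{1}_{X\setminus E}|E)=0$. A process of pavings is a family $(\mathcal{E}_t)_{t\ge0}$ with $\emptyset\in\mathcal{E}_t\subseteq\Sigma$ for all $t$; $\mathcal{E}_t^0=\mathcal{E}_t\setminus\{\emptyset\}$. A parametric family of CAOs (pFCA) $\{\mathsf{A}_t(\cdot|E)\colon E\in\mathcal{E}_t,\,t\ge0\}$ consists of CAOs $\mathsf{A}_t(\cdot|E)$ w.r.t. $E$ for each $t$ and $E\in\mathcal{E}_t^0$, with the convention $\mathsf{A}_t(\cdot|\emptyset)=\infty$. The pFCA is idempotent if $\mathsf{A}_t(b\mathbf{1}_X|E)=b$ for all $b\in(0,\infty)$, all $t\ge0$ and all $E\in\mathcal{E}_t^0$. The generalized level measure is $\boldsymbol{\mu}_{\mathscr{A}}(f,t)=\sup\{\mu_t(E)\colon \mathsf{A}_t(f|E)\ge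 t,\ E\in\mathcal{E}_t\}$ for $t\ge0$. *)

(* Defs.v *)
From HB Require Import structures.
From mathcomp Require Import all_boot all_order all_algebra.
From mathcomp Require Import all_classical all_reals all_analysis.
Set Implicit Arguments. Unset Strict Implicit. Unset Printing Implicit Defensive.
Import Order.TTheory GRing.Theory Num.Theory.
Local Open Scope classical_set_scope.
Local Open Scope ring_scope.

Section Defs.
Context {d : measure_display} {X : measurableType d} {R : realType}.

Definition Fset : set (X -> R) :=
  [set f : X -> R | measurable_fun setT f /\ (forall x, 0 <= f x) /\
           exists M : R, forall x, f x <= M].

Definition is_CAO (E : set X) (A : (X -> R) -> \bar R) : Prop :=
  (forall f g, Fset f -> Fset g -> (forall x, E x -> f x <= g x) ->
     (A f <= A g)%E) /\
  A (\1_(~` E) : X -> R) = 0%E.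

Definition process_of_pavings (Ep : R -> set (set X)) : Prop :=
  forall t, 0 <= t -> Ep t set0 /\ (forall B, Ep t B -> measurable B).

Definition monotone_measure (m : set X -> \bar R) : Prop :=
  (forall B C, measurable B -> measurable C -> B `<=` C -> (m B <= m C)%E) /\
  m set0 = 0%E /\ (0 < m setT)%E.

Definition pFCA (Ep : R -> set (set X)) (A : R -> set X -> (X -> R) -> \bar R)
  : Prop :=
  forall t, 0 <= t ->
    (forall E, Ep t E -> E <> set0 -> is_CAO E (A t E)) /\
    (forall f, A t set0 f = +oo%E).

Definition idempotent_pFCA (Ep : R -> set (set X))
  (A : R -> set X -> (X -> R) -> \bar R) : Prop :=
  forall b : R, 0 < b -> forall t, 0 <= t ->
    forall E, Ep t E -> E <> set0 -> A t E (cst b) = b%:E.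

Definition gen_level_measure (mu : R -> set X -> \bar R)
  (Ep : R -> set (set X)) (A : R -> set X -> (X -> R) -> \bar R)
  (f : X -> R) (t : R) : \bar R :=
  ereal_sup [set mu t E | E in [set E | Ep t E /\ (t%:E <= A t E f)%E]].

End Defs.

(* Main.v *)
Require Import Defs.
From HB Require Import structures.
From mathcomp Require Import all_boot all_order all_algebra.
From mathcomp Require Import all_classical all_reals all_analysis.
Import Order.TTheory GRing.Theory Num.Theory.
Local Open Scope classical_set_scope.
Local Open Scope ring_scope.

Theorem proposition3p8 (d : measure_display) (X : measurableType d)
  (R : realType) (Ep : R -> set (set X)) (mu : R -> set X -> \bar R)
  (A : R -> set X -> (X -> R) -> \bar R) :
  process_of_pavings Ep ->
  (forall t, 0 <= t -> monotone_measure (mu t)) ->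
  pFCA Ep A -> idempotent_pFCA Ep A ->
  forall lam : R, 0 < lam -> forall t : R, 0 <= t ->
    gen_level_measure mu Ep A (cst lam) t
      = (ereal_sup [set mu t E | E in Ep t] * (\1_(`[0, lam]) t : R)%:E)%E
    /\ (Ep t setT ->
        gen_level_measure mu Ep A (cst lam) t
          = (mu t setT * (\1_(`[0, lam]) t : R)%:E)%E).
Proof.
move=> hP hmu hA hI lam lam0 t t0.
have [P0 Pm] := hP t t0.
have [mmono [m0 _]] := hmu t t0.
have AE : forall E, Ep t E -> E <> set0 -> A t E (cst lam) = lam%:E.
  by move=> E HE HE0; apply: hI.
have A0 : A t set0 (cst lam) = +oo%E by case: (hA t t0) => _ ->.
have main : gen_level_measure mu Ep A (cst lam) t
      = (ereal_sup [set mu t E | E in Ep t] * (\1_(`[0, lam]) t : R)%:E)%E.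
  rewrite /gen_level_measure indicE.
  have [tl|lt] := leP t lam.
    rewrite mem_set /=; last by rewrite /= in_itv /= t0 tl.
    rewrite mule1; congr ereal_sup; apply/seteqP; split => y [E HE <-].
      by exists E => //; case: HE.
    exists E => //; split => //.
    have [->|HE0] := eqVneq E set0; first by rewrite A0 leey.
    by rewrite AE // ?lee_fin //; apply/eqP.
  rewrite memNset /=; last by rewrite /= in_itv /= t0 leNgt lt.
  rewrite mule0.
  have -> : [set mu t E | E in [set E | Ep t E /\ (t%:E <= A t E (cst lam))%E]]
     = [set 0%E].
    apply/seteqP; split => y.
      move=> [E [HE Hle] <-].
      have [->|HE0] := eqVneq E set0; first by rewrite m0.
      rewrite AE ?lee_fin in Hle => //; last by apply/eqP.
      by move: (lt_le_trans lt Hle); rewrite ltxx.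
    move=> ->; exists set0 => //; split => //; by rewrite A0 leey.
  by rewrite ereal_sup1.
split => // HT; rewrite main; congr (_ * _)%E.
apply/eqP; rewrite eq_le; apply/andP; split.
  apply: ge_ereal_sup => y [E HE <-].
  by apply: mmono => //; apply: Pm.
by apply: ereal_sup_ubound; exists setT.
Qed.
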